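(* The static quadratic game in which each player $n=1,\ldots,N$ solves \[ \min_{\delta u_{n,:}} \; J_n(\bar u) + \frac{\partial J_n(\bar u)}{\partial u}\,\delta u + \frac{1}{2}\,\delta u^\top \frac{\partial^2 J_n(\bar u)}{\partial u^2}\,\delta u \] (whose stacked first-order conditions are exactly the Newton step $\frac{\partial \mathcal{J}(\bar u)}{\partial u}\delta u = -\mathcal{J}(\bar u)$) is equivalent to the dynamic game in which each player $n$ solves \[ \min_{\delta u_{n,:}} \; \frac{1}{2}\sum_{k=0}^T\left(\begin{bmatrix}1\\ \delta x_k\\ \delta u_{:,k}\end{bmatrix}^\top M_{n,k}\begin{bmatrix}1\\ \delta x_k\\ \delta u_{:,k}\end{bmatrix} + M^{1x}_{n,k}\,\Delta x_k\right) \] subject to $\delta x_0=0$, $\Delta x_0=0$, $\delta x_{k+1}=A_k\delta x_k + B_k\delta u_{:,k}$, $\Delta x_{k+1} = A_k\Delta x_k + R_k(\delta x_k,\delta u_{:,k})$, $k=0,1,\ldots,T$.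
   Context: Consider a deterministic finite-horizon dynamic game with $N$ players: state $x_k\in\mathbb{R}^{n_x}$, joint input $u_{:,k}=[u_{1,k}^\top,\ldots,u_{N,k}^\top]^\top$, dynamics $x_{k+1}=f_k(x_k,u_{:,k})$ with $x_0$ fixed, and player costs $J_n(u)=\sum_{k=0}^T c_{n,k}(x_k,u_{:,k})$, where $u$ stacks all inputs over all times and $u_{n,:}$ denotes player $n$'s inputs over all times. $\mathcal{J}(u)$ stacks the gradients $\partial J_n/\partial u_{n,:}$, $n=1,\ldots,N$. Let $(\bar x,\bar u)$ be a nominal trajectory satisfying the dynamics, $\delta u = u-\bar u$. Define, evaluated at $(\bar x,\bar u)$: $A_k=\partial f_k/\partial x_k$, $B_k=\partial f_k/\partial u_{:,k}$; $G_k^l$ the Hessian of the $l$-th component $f_k^l$ with respect to $(x_k,u_{:,k})$; $R_k(\delta x_k,\delta u_{:,k})$ the vector whose $l$-th entry is $[\delta x_k;\delta u_{:,k}]^\top G_k^l[\delta x_k;\delta u_{:,k}]$; and \[ M_{n,k}=\begin{bmatrix} 2c_{n,k} & \partial c_{n,k}/\partial x_k & \partial c_{n,k}/\partial u_{:,k}\\ (\partial c_{n,k}/\partial x_k)^\top & \partial^2 c_{n,k}/\partial x_k^2 & \partial^2 c_{n,k}/\partial x_k\partial u_{:,k}\\ (\partial c_{n,k}/\partial u_{:,k})^\top & \partial^2 c_{n,k}/\partial u_{:,k}\partial x_k & \partial^2 c_{n,k}/\partial u_{:,k}^2\end{bmatrix}, \] with block $M^{1x}_{n,k}=\partial c_{n,k}/\partial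 x_k$. The game states satisfy $\delta x_k=\sum_i \frac{\partial x_k}{\partial u_{:,i}}\delta u_{:,i}$ and $\Delta x_k^l=\sum_{i,j}\delta u_{:,i}^\top \frac{\partial^2 x_k^l}{\partial u_{:,i}\partial u_{:,j}}\delta u_{:,j}$. *)

(* Defs.v *)
From HB Require Import structures.
From mathcomp Require Import all_boot all_order all_algebra.
From mathcomp Require Import all_classical all_reals all_analysis.
Set Implicit Arguments. Unset Strict Implicit. Unset Printing Implicit Defensive.
Import Order.TTheory GRing.Theory Num.Theory.
Import numFieldNormedType.Exports.
Local Open Scope ring_scope.

Section Defs.
Variable R : realType.

Definition e_ (m : nat) (j : 'I_m) : 'cV[R]_m := delta_mx j 0.

Definition grad m (F : 'cV[R]_m -> R) (w : 'cV[R]_m) : 'rV[R]_m :=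
  \row_j derive F w (e_ j).

Definition hess m (F : 'cV[R]_m -> R) (w : 'cV[R]_m) : 'M[R]_m :=
  \matrix_(i, j) derive (fun y => derive F y (e_ i)) w (e_ j).

Definition jac m p (F : 'cV[R]_m -> 'cV[R]_p) (w : 'cV[R]_m) : 'M[R]_(p, m) :=
  \matrix_(l, j) derive (fun y => F y l 0) w (e_ j).

Definition C2 m (F : 'cV[R]_m -> R) : Prop :=
  (forall y, differentiable F y) /\
  (forall v y, differentiable (fun z => 'd F z v) y) /\
  (forall v1 v2, continuous (fun z => 'd (fun z' => 'd F z' v1) z v2)).

Definition stack nx nu (A : Type) (F : 'cV[R]_nx -> 'cV[R]_nu -> A)
  (w : 'cV[R]_(nx + nu)) : A := F (usubmx w) (dsubmx w).

Section Game.
Variables (N nx nu T : nat).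
Variable f : nat -> 'cV[R]_nx -> 'cV[R]_nu -> 'cV[R]_nx.
Variable c : 'I_N -> nat -> 'cV[R]_nx -> 'cV[R]_nu -> R.
Variable x0 : 'cV[R]_nx.

(* Full input u : column k is the joint input u_{:,k}, k = 0..T. *)
Definition uat (u : 'M[R]_(nu, T.+1)) (k : nat) : 'cV[R]_nu := col (inord k) u.

Fixpoint traj (u : 'M[R]_(nu, T.+1)) (k : nat) : 'cV[R]_nx :=
  match k with
  | 0 => x0
  | k'.+1 => f k' (traj u k') (uat u k')
  end.

Definition Jcost (n : 'I_N) (u : 'M[R]_(nu, T.+1)) : R :=
  \sum_(k < T.+1) c n k (traj u k) (uat u k).

Definition static_cost (ubar : 'M[R]_(nu, T.+1)) (n : 'I_N)
    (du : 'M[R]_(nu, T.+1)) : R :=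
  Jcost n ubar
  + \sum_(i < nu) \sum_(k < T.+1)
        derive (Jcost n) ubar (delta_mx i k) * du i k
  + 2^-1 * \sum_(i < nu) \sum_(k < T.+1) \sum_(i' < nu) \sum_(k' < T.+1)
        du i k * derive (fun w => derive (Jcost n) w (delta_mx i k)) ubar
                   (delta_mx i' k') * du i' k'.

Definition A_ (xbar : nat -> 'cV[R]_nx) (ubar : 'M[R]_(nu, T.+1)) k
  : 'M[R]_nx := jac (fun x => f k x (uat ubar k)) (xbar k).
Definition B_ (xbar : nat -> 'cV[R]_nx) (ubar : 'M[R]_(nu, T.+1)) k
  : 'M[R]_(nx, nu) := jac (fun u => f k (xbar k) u) (uat ubar k).
Definition G_ (xbar : nat -> 'cV[R]_nx) (ubar : 'M[R]_(nu, T.+1)) k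
  (l : 'I_nx) : 'M[R]_(nx + nu) :=
  hess (stack (fun x u => f k x u l 0)) (col_mx (xbar k) (uat ubar k)).
Definition R_ (xbar : nat -> 'cV[R]_nx) (ubar : 'M[R]_(nu, T.+1)) k
  (dx : 'cV[R]_nx) (du : 'cV[R]_nu) : 'cV[R]_nx :=
  \col_l ((col_mx dx du)^T *m G_ xbar ubar k l *m col_mx dx du) 0 0.

Definition gradc (xbar : nat -> 'cV[R]_nx) (ubar : 'M[R]_(nu, T.+1)) n k
  : 'rV[R]_(nx + nu) :=
  grad (stack (c n k)) (col_mx (xbar k) (uat ubar k)).
Definition M_ (xbar : nat -> 'cV[R]_nx) (ubar : 'M[R]_(nu, T.+1)) n k
  : 'M[R]_(1 + (nx + nu)) :=
  block_mx (2 * c n k (xbar k) (uat ubar k))%:M (gradc xbar ubar n k)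
           (gradc xbar ubar n k)^T
           (hess (stack (c n k)) (col_mx (xbar k) (uat ubar k))).
Definition M1x_ (xbar : nat -> 'cV[R]_nx) (ubar : 'M[R]_(nu, T.+1)) n k
  : 'rV[R]_nx := lsubmx (gradc xbar ubar n k).

Definition dyn_cost (xbar : nat -> 'cV[R]_nx) (ubar : 'M[R]_(nu, T.+1))
    (n : 'I_N) (dx Dx : nat -> 'cV[R]_nx) (du : 'M[R]_(nu, T.+1)) : R :=
  2^-1 * \sum_(k < T.+1)
    (((col_mx 1 (col_mx (dx k) (uat du k)))^T *m M_ xbar ubar n k
        *m col_mx 1 (col_mx (dx k) (uat du k))) 0 0
     + (M1x_ xbar ubar n k *m Dx k) 0 0).

Fixpoint dxs xbar ubar (du : 'M[R]_(nu, T.+1)) (k : nat) : 'cV[R]_nx :=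
  match k with
  | 0 => 0
  | k'.+1 => A_ xbar ubar k' *m dxs xbar ubar du k'
             + B_ xbar ubar k' *m uat du k'
  end.
Fixpoint Dxs xbar ubar (du : 'M[R]_(nu, T.+1)) (k : nat) : 'cV[R]_nx :=
  match k with
  | 0 => 0
  | k'.+1 => A_ xbar ubar k' *m Dxs xbar ubar du k'
             + R_ xbar ubar k' (dxs xbar ubar du k') (uat du k')
  end.
Definition dyn_cost_u xbar ubar n du :=
  dyn_cost xbar ubar n (dxs xbar ubar du) (Dxs xbar ubar du) du.

(* Nash equilibrium: player n (owning the input rows i with own i = n)
   cannot decrease its cost by changing only its own inputs du_{n,:}. *)
Definition isNash (own : 'I_nu -> 'I_N)
    (cost : 'I_N -> 'M[R]_(nu, T.+1) -> R) (du : 'M[R]_(nu, T.+1)) : Prop :=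
  forall (n : 'I_N) (dv : 'M[R]_(nu, T.+1)),
    (forall i k, own i != n -> dv i k = du i k) -> cost n du <= cost n dv.

End Game.
End Defs.

(* Main.v *)
Require Import Defs.
From HB Require Import structures.
From mathcomp Require Import all_boot all_order all_algebra.
From mathcomp Require Import all_classical all_reals all_analysis.
Import Order.TTheory GRing.Theory Num.Theory.
Import numFieldNormedType.Exports.
Local Open Scope ring_scope.
From mathcomp Require Import ring.
From mathcomp Require Import ring.
Section S.
Variables (R : realType) (V W : normedModType R).

Lemma diff_sumf (I : Type) (r : seq I) (P : pred I) (F : I -> V -> W) x :
  (forall i, differentiable (F i) x) ->
  differentiable (fun z => \sum_(i <- r | P i) F i z) x /\
  forall v, 'd (fun z => \sum_(i <- r | P i) F i z) x v
            = \sum_(i <- r | P i) 'd (F i) x v.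
Proof.
move=> dF; elim: r => [|i r [IH1 IH2]].
  under eq_fun do rewrite big_nil.
  split; first exact: differentiable_cst.
  by move=> v; rewrite big_nil diff_cst.
have [Pi|Pi] := boolP (P i).
  have -> : (fun z => \sum_(j <- i :: r | P j) F j z)
     = F i + (fun z => \sum_(j <- r | P j) F j z).
    by apply/funext => z; rewrite big_cons Pi.
  split; first exact: differentiableD.
  by move=> v; rewrite diffD // big_cons Pi /= -IH2.
have -> : (fun z => \sum_(j <- i :: r | P j) F j z)
     = (fun z => \sum_(j <- r | P j) F j z).
  by apply/funext => z; rewrite big_cons (negbTE Pi).
by split => // v; rewrite big_cons (negbTE Pi).
Qed.

Lemma diff_sum_fin (I : finType) (F : I -> V -> W) x :
  (forall i, differentiable (F i) x) ->
  differentiable (fun z => \sum_i F i z) x /\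
  forall v, 'd (fun z => \sum_i F i z) x v = \sum_i 'd (F i) x v.
Proof. move=> dF; have := @diff_sumf I (index_enum I) xpredT F x dF. by []. Qed.

End S.
Arguments diff_sum_fin {R V W I} F x.

Section S2.
Variables (R : realType) (V : normedModType R).

Lemma diffM' (f g : V -> R) x : differentiable f x -> differentiable g x ->
  differentiable (fun z => f z * g z) x /\
  forall v, 'd (fun z => f z * g z) x v = f x * 'd g x v + g x * 'd f x v.
Proof.
move=> df dg; have -> : (fun z => f z * g z) = f * g by [].
split; first exact: differentiableM.
by move=> v; rewrite diffM.
Qed.

Lemma diff_comp' (W1 W2 : normedModType R) (H : V -> W1) (G : W1 -> W2) x :
  differentiable H x -> differentiable G (H x) ->
  differentiable (fun z => G (H z)) x /\
  forall v, 'd (fun z => G (H z)) x v = 'd G (H x) ('d H x v).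
Proof.
move=> dH dG; have -> : (fun z => G (H z)) = G \o H by [].
split; first exact: differentiable_comp.
by move=> v; rewrite diff_comp.
Qed.

Arguments diffM' {f g x}.
Arguments diff_comp' {W1 W2 H G x}.
Definition S2 (F : V -> R) :=
  (forall w, differentiable F w) /\ (forall v w, differentiable (fun z => 'd F z v) w).

Lemma col_sum m (a : 'I_m -> R) : \col_j a j = \sum_j a j *: e_ R j.
Proof.
apply/matrixP => i k; rewrite !mxE summxE (bigD1 i) //= big1.
  by rewrite !mxE ord1 !eqxx mulr1 addr0.
by move=> j ji; rewrite !mxE eq_sym (negbTE ji) mulr0.
Qed.

Lemma S2_comp m (g : 'cV[R]_m -> R) (h : 'I_m -> V -> R) :
  (forall y, differentiable g y) -> (forall v y, differentiable (fun z => 'd g z v) y) ->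
  (forall j, S2 (h j)) ->
  S2 (fun w => g (\col_j h j w)) /\
  (forall w v, 'd (fun w => g (\col_j h j w)) w v
     = \sum_j 'd (h j) w v * 'd g (\col_j h j w) (e_ R j)) /\
  (forall w v v', 'd (fun z => 'd (fun w => g (\col_j h j w)) z v) w v' =
     \sum_j ('d (fun z => 'd (h j) z v) w v' * 'd g (\col_j h j w) (e_ R j)
             + 'd (h j) w v * \sum_i 'd (h i) w v' *
                 'd (fun y => 'd g y (e_ R j)) (\col_j h j w) (e_ R i))).
Proof.
move=> dg ddg Sh.
pose H := fun w => \col_j h j w.
have HE : H = fun w => \sum_j h j w *: e_ R j.
  by apply/funext => w; rewrite /H col_sum.
have dH w : differentiable H w /\ forall v, 'd H w v = \sum_j 'd (h j) w v *: e_ R j.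
  rewrite HE; have [] := diff_sum_fin (fun j w => h j w *: e_ R j) w.
    by move=> j; apply: differentiableZl; exact: (Sh j).1.
  move=> d1 d2; split => // v; rewrite d2; apply: eq_bigr => j _.
  by rewrite diffZl //; exact: (Sh j).1.
have dF w : differentiable (fun z => g (H z)) w /\
   forall v, 'd (fun z => g (H z)) w v = \sum_j 'd (h j) w v * 'd g (H w) (e_ R j).
  have [d1 d2] := diff_comp' (dH w).1 (dg (H w)).
  split => // v; rewrite d2 (dH w).2 linear_sum; apply: eq_bigr => j _.
  by rewrite linearZ.
have PsiE v : (fun z => 'd (fun z => g (H z)) z v)
   = fun z => \sum_j 'd (h j) z v * 'd g (H z) (e_ R j).
  by apply/funext => z; rewrite (dF z).2.
have dGH j w : differentiable (fun z => 'd g (H z) (e_ R j)) w /\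
   forall v', 'd (fun z => 'd g (H z) (e_ R j)) w v'
     = \sum_i 'd (h i) w v' * 'd (fun y => 'd g y (e_ R j)) (H w) (e_ R i).
  have [d1 d2] := diff_comp' (dH w).1 (ddg (e_ R j) (H w)).
  split => // v'. rewrite d2 (dH w).2. rewrite [LHS](linear_sum ('d (fun z => 'd g z (e_ R j)) (H w))). apply: eq_bigr => i _. by rewrite [LHS]linearZ.
have dT v w j : differentiable (fun z => 'd (h j) z v * 'd g (H z) (e_ R j)) w.
  have [d1 _] := diffM' ((Sh j).2 v w) (dGH j w).1. exact: d1.
split; first split.
- by move=> w; exact: (dF w).1.
- move=> v w; rewrite /= -/H PsiE.
  by have [] := diff_sum_fin _ w (dT v w).
split; first by move=> w v; exact: (dF w).2.
move=> w v v'; rewrite -/H PsiE.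
have [_ ->] := diff_sum_fin _ w (dT v w).
apply: eq_bigr => j _.
have [_ ->] := diffM' ((Sh j).2 v w) (dGH j w).1.
by rewrite (dGH j w).2 addrC mulrC.
Qed.


End S2.
Arguments S2 {R V}.
Arguments diffM' {R V f g x}.
Arguments diff_comp' {R V W1 W2 H G x}.
Arguments S2_comp {R V m}.

Section Coord.
Variable R : realType.
Lemma coord_d p q (i : 'I_p) (j : 'I_q) (w v : 'M[R]_(p, q)) :
  differentiable (fun N : 'M[R]_(p, q) => N i j) w /\
  'd (fun N : 'M[R]_(p, q) => N i j) w v = v i j.
Proof.
have @f : {linear 'M[R]_(p, q) -> R}.
  by exists (fun N : 'M[R]_(_, _) => N i j); do 2![eexists]; do ?[constructor];
     rewrite ?mxE// => ? *; rewrite ?mxE//; move=> ?; rewrite !mxE.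
rewrite (_ : (fun _ => _) = f) //; split.
  exact/linear_differentiable/coord_continuous.
by rewrite diff_lin //; exact: coord_continuous.
Qed.

Lemma S2_coord p q (i : 'I_p) (j : 'I_q) :
  S2 (fun N : 'M[R]_(p, q) => N i j) /\
  (forall w v, 'd (fun N : 'M[R]_(p, q) => N i j) w v = v i j) /\
  (forall w v v', 'd (fun z => 'd (fun N : 'M[R]_(p, q) => N i j) z v) w v' = 0).
Proof.
have E v : (fun z => 'd (fun N : 'M[R]_(p, q) => N i j) z v) = cst (v i j).
  by apply/funext => z; rewrite (coord_d _ _ i j z v).2.
split; first split.
- by move=> w; exact: (coord_d _ _ i j w w).1.
- by move=> v w; rewrite E; exact: differentiable_cst.
split; first by move=> w v; exact: (coord_d _ _ i j w v).2.
by move=> w v v'; rewrite E diff_cst.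
Qed.
End Coord.

Section Part.
Variable R : realType.
Local Open Scope classical_set_scope.
Lemma partial_x nx nu (F : 'cV[R]_nx -> 'cV[R]_nu -> R) a b j :
  derive (fun y => F y b) a (e_ R j) = derive (stack F) (col_mx a b) (e_ R (lshift nu j)).
Proof.
rewrite /derive /e_ delta_mx_ushift.
suff -> : (fun h : R => h^-1 *: ((stack F \o shift (col_mx a b)) (h *: col_mx (delta_mx j 0) 0) - stack F (col_mx a b)))
   = (fun h => h^-1 *: (((fun y => F y b) \o shift a) (h *: delta_mx j 0) - F a b)) by [].
apply/funext => h /=.
by rewrite /stack /shift /= scale_col_mx add_col_mx scaler0 add0r !col_mxKu !col_mxKd.
Qed.
Lemma partial_u nx nu (F : 'cV[R]_nx -> 'cV[R]_nu -> R) a b j :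
  derive (fun y => F a y) b (e_ R j) = derive (stack F) (col_mx a b) (e_ R (rshift nx j)).
Proof.
rewrite /derive /e_ delta_mx_dshift.
suff -> : (fun h : R => h^-1 *: ((stack F \o shift (col_mx a b)) (h *: col_mx 0 (delta_mx j 0)) - stack F (col_mx a b)))
   = (fun h => h^-1 *: (((fun y => F a y) \o shift b) (h *: delta_mx j 0) - F a b)) by [].
apply/funext => h /=.
by rewrite /stack /shift /= scale_col_mx add_col_mx scaler0 add0r !col_mxKu !col_mxKd.
Qed.
Lemma S2_cst (V : normedModType R) (a : R) : S2 (fun _ : V => a) /\
  (forall w v, 'd (fun _ : V => a) w v = 0) /\
  (forall w v v', 'd (fun z => 'd (fun _ : V => a) z v) w v' = 0).
Proof.
have -> : (fun _ : V => a) = cst a by [].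
have E v : (fun z : V => 'd (cst a) z v) = cst 0.
  by apply/funext => z; rewrite diff_cst.
split; first split.
- by move=> w; exact: differentiable_cst.
- by move=> v w; rewrite E; exact: differentiable_cst.
split; first by move=> w v; rewrite diff_cst.
by move=> w v v'; rewrite E diff_cst.
Qed.
Lemma dA nx nu (F : 'cV[R]_nx -> 'cV[R]_nu -> R) a b j :
  (forall y, differentiable (stack F) y) ->
  derive (fun y => F y b) a (e_ R j) = 'd (stack F) (col_mx a b) (e_ R (lshift nu j)).
Proof. by move=> dF; rewrite partial_x deriveE. Qed.
Lemma dB nx nu (F : 'cV[R]_nx -> 'cV[R]_nu -> R) a b j :
  (forall y, differentiable (stack F) y) ->
  derive (fun y => F a y) b (e_ R j) = 'd (stack F) (col_mx a b) (e_ R (rshift nx j)).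
Proof. by move=> dF; rewrite partial_u deriveE. Qed.
Lemma quad_form m (w : 'cV[R]_m) (G : 'M[R]_m) :
  \sum_j w j 0 * \sum_i w i 0 * G j i = (w^T *m G *m w) 0 0.
Proof.
rewrite mxE; under [RHS]eq_bigr => j _ do rewrite mxE big_distrl /=.
rewrite exchange_big /=; apply: eq_bigr => j _; rewrite big_distrr /=.
by apply: eq_bigr => i _; rewrite !mxE; ring.
Qed.
End Part.

Section Gen.
Variable R : realType.
Lemma lin_delta p q (F : 'M[R]_(p, q) -> R) x (v : 'M[R]_(p, q)) : differentiable F x ->
  \sum_i \sum_j derive F x (delta_mx i j) * v i j = 'd F x v.
Proof.
move=> dF.
have -> : 'd F x v = 'd F x (\sum_i \sum_j v i j *: delta_mx i j) by rewrite -matrix_sum_delta.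
rewrite linear_sum; apply: eq_bigr => i _; rewrite linear_sum; apply: eq_bigr => j _.
by rewrite linearZ /= deriveE // mulrC.
Qed.

Lemma lin_delta2 p q (F : 'M[R]_(p, q) -> R) x (v : 'M[R]_(p, q)) : S2 F ->
  \sum_i \sum_j \sum_i' \sum_j'
     v i j * derive (fun w => derive F w (delta_mx i j)) x (delta_mx i' j') * v i' j'
  = 'd (fun z => 'd F z v) x v.
Proof.
move=> [dF ddF].
have E i j : (fun w => derive F w (delta_mx i j)) = (fun w => 'd F w (delta_mx i j)).
  by apply/funext => w; rewrite deriveE.
have PsiE : (fun z => 'd F z v) = fun z => \sum_i \sum_j v i j * 'd F z (delta_mx i j).
  apply/funext => z; rewrite -(@lin_delta p q F z v (dF z)); apply: eq_bigr => i _.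
  by apply: eq_bigr => j _; rewrite deriveE // mulrC.
have dT i j : differentiable (fun z => v i j * 'd F z (delta_mx i j)) x /\
   'd (fun z => v i j * 'd F z (delta_mx i j)) x v = v i j * 'd (fun z => 'd F z (delta_mx i j)) x v.
  have -> : (fun z => v i j * 'd F z (delta_mx i j)) = v i j *: (fun z => 'd F z (delta_mx i j)).
    by apply/funext.
  split; first by apply: differentiableZ; exact: ddF.
  exact: (congr1 (fun h => h v) (diffZ (v i j) (ddF (delta_mx i j) x))).
have dI i : differentiable (fun z => \sum_j v i j * 'd F z (delta_mx i j)) x /\
   'd (fun z => \sum_j v i j * 'd F z (delta_mx i j)) x v
     = \sum_j v i j * 'd (fun z => 'd F z (delta_mx i j)) x v.
  have [d1 d2] := diff_sum_fin (fun j z => v i j * 'd F z (delta_mx i j)) x (fun j => (dT i j).1).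
  split; first exact: d1.
  exact: (etrans (d2 v) (eq_bigr _ (fun j _ => (dT i j).2))).
rewrite PsiE.
have [_ ->] := diff_sum_fin (fun i z => \sum_j v i j * 'd F z (delta_mx i j)) x (fun i => (dI i).1).
apply: eq_bigr => i _; rewrite (dI i).2; apply: eq_bigr => j _.
rewrite -(@lin_delta p q _ x v (ddF (delta_mx i j) x)) big_distrr /=; apply: eq_bigr => i' _.
rewrite big_distrr /=; apply: eq_bigr => j' _.
by rewrite E mulrA.
Qed.
End Gen.

Lemma blk (R : realType) m (a : R) (g : 'rV[R]_m) (H : 'M[R]_m) (w : 'cV[R]_m) :
  ((col_mx 1 w)^T *m block_mx (2 * a)%:M g g^T H *m col_mx 1 w) 0 0
  = 2 * a + 2 * (g *m w) 0 0 + (w^T *m H *m w) 0 0.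
Proof.
rewrite tr_col_mx mul_row_block mul_row_col trmx1 !mul1mx mulmx1 -trmx_mul.
rewrite mulmxDl.
set gw := g *m w; set Q := w^T *m H *m w.
rewrite !mxE eqxx mulr1n.
ring.
Qed.

Section Main.
Variables (R : realType) (N nx nu T : nat)
  (f : nat -> 'cV[R]_nx -> 'cV[R]_nu -> 'cV[R]_nx)
  (c : 'I_N -> nat -> 'cV[R]_nx -> 'cV[R]_nu -> R)
  (x0 : 'cV[R]_nx) (xbar : nat -> 'cV[R]_nx) (ubar : 'M[R]_(nu, T.+1)).
Hypothesis Hf : forall k l, (k <= T)%N -> C2 (stack (fun x u => f k x u l 0)).
Hypothesis Hc : forall n k, (k <= T)%N -> C2 (stack (c n k)).
Hypothesis Hx0 : xbar 0%N = x0.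
Hypothesis Hxbar : forall k, (k < T)%N -> xbar k.+1 = f k (xbar k) (uat ubar k).
Variable du : 'M[R]_(nu, T.+1).

Definition hh k (j : 'I_(nx+nu)) (u : 'M[R]_(nu, T.+1)) : R :=
  col_mx (traj f x0 u k) (uat u k) j 0.

Lemma colhh k u : \col_j hh k j u = col_mx (traj f x0 u k) (uat u k).
Proof. by apply/matrixP => i z; rewrite [LHS]mxE /hh (ord1 z). Qed.

Definition TP k := forall l, S2 (fun u : 'M[R]_(nu, T.+1) => traj f x0 u k l 0) /\
    'd (fun u : 'M[R]_(nu, T.+1) => traj f x0 u k l 0) ubar du = dxs f xbar ubar du k l 0 /\
    'd (fun z => 'd (fun u : 'M[R]_(nu, T.+1) => traj f x0 u k l 0) z du) ubar du
      = Dxs f xbar ubar du k l 0.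

Lemma hh_prop k : TP k -> forall j, S2 (hh k j) /\
   'd (hh k j) ubar du = col_mx (dxs f xbar ubar du k) (uat du k) j 0 /\
   'd (fun z => 'd (hh k j) z du) ubar du = col_mx (Dxs f xbar ubar du k) 0 j 0.
Proof.
move=> IH j; have [j' ->|j' ->] := split_ordP j.
  have -> : hh k (lshift nu j') = fun u => traj f x0 u k j' 0.
    by apply/funext => u; rewrite /hh col_mxEu.
  by rewrite !col_mxEu; exact: IH.
have -> : hh k (rshift nx j') = fun u => u j' (inord k).
  by apply/funext => u; rewrite /hh col_mxEd /uat mxE.
have [S [D1 D2]] := S2_coord R _ _ j' (inord k : 'I_T.+1).
split => //. split.
  by rewrite col_mxEd (D1 ubar du) /uat mxE.
by rewrite col_mxEd (D2 ubar du du) mxE.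
Qed.

Lemma traj_ind k : (k <= T)%N -> traj f x0 ubar k = xbar k /\ TP k.
Proof.
elim: k => [_|k IH kT].
  split; first by rewrite /= Hx0.
  move=> l /=.
  have [S [D1 D2]] := S2_cst R 'M[R]_(nu, T.+1) (x0 l 0).
  split; first exact: S.
  split.
    by rewrite (D1 ubar du) mxE.
  by rewrite (D2 ubar du du) mxE.
have [IH1 IH2] := IH (ltnW kT).
split; first by rewrite /= IH1 Hxbar.
move=> l.
pose g := stack (fun x u => f k x u l 0).
have -> : (fun u : 'M[R]_(nu, T.+1) => traj f x0 u k.+1 l 0) = fun u => g (\col_j hh k j u).
  by apply/funext => u; rewrite colhh /g /stack col_mxKu col_mxKd.
have [C1 [C2' _]] := Hf k l (ltnW kT).
have Hh := hh_prop k IH2.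
have [S [D1 D2]] := S2_comp g (hh k) C1 C2' (fun j => (Hh j).1).
split; first exact: S.
split.
  rewrite (D1 ubar du) colhh IH1 /= [in RHS]mxE [X in _ = X + _]mxE [X in _ = _ + X]mxE.
  rewrite big_split_ord /=; congr (_ + _); apply: eq_bigr => j _.
    by rewrite (Hh (lshift nu j)).2.1 col_mxEu /A_ /jac mxE (dA _ _ _ (fun x u => f k x u l 0) _ _ _ C1) mulrC.
  rewrite (Hh (rshift nx j)).2.1 col_mxEd /B_ /jac !mxE; by rewrite (dB _ _ _ (fun x u => f k x u l 0) (xbar k) (uat ubar k) _ C1) mulrC.
rewrite (D2 ubar du du) colhh IH1 /= [in RHS]mxE big_split /=.
have HG a b : 'd (fun y => 'd g y (e_ R a)) (col_mx (xbar k) (uat ubar k)) (e_ R b)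
    = G_ f xbar ubar k l a b.
  rewrite /G_ /hess mxE.
  have -> : (fun y => derive g y (e_ R a)) = (fun y => 'd g y (e_ R a)).
    by apply/funext => y; rewrite deriveE.
  by rewrite deriveE.
congr (_ + _).
  rewrite big_split_ord /= [X in _ + X]big1 ?addr0; last first.
    by move=> j _; rewrite (Hh (rshift nx j)).2.2 col_mxEd mxE mul0r.
  rewrite mxE; apply: eq_bigr => j _.
  by rewrite (Hh (lshift nu j)).2.2 col_mxEu /A_ /jac !mxE (dA _ _ _ (fun x u => f k x u l 0) _ _ _ C1) mulrC.
rewrite /R_ mxE -quad_form; apply: eq_bigr => j _.
rewrite (Hh j).2.1; congr (_ * _); apply: eq_bigr => i _.
by rewrite (Hh i).2.1 HG.
Qed.

Lemma cost_term n k : (k <= T)%N ->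
  S2 (fun u : 'M[R]_(nu, T.+1) => c n k (traj f x0 u k) (uat u k)) /\
  'd (fun u : 'M[R]_(nu, T.+1) => c n k (traj f x0 u k) (uat u k)) ubar du
    = (gradc c xbar ubar n k *m col_mx (dxs f xbar ubar du k) (uat du k)) 0 0 /\
  'd (fun z => 'd (fun u : 'M[R]_(nu, T.+1) => c n k (traj f x0 u k) (uat u k)) z du) ubar du
    = (M1x_ c xbar ubar n k *m Dxs f xbar ubar du k) 0 0
      + ((col_mx (dxs f xbar ubar du k) (uat du k))^T
          *m hess (stack (c n k)) (col_mx (xbar k) (uat ubar k))
          *m col_mx (dxs f xbar ubar du k) (uat du k)) 0 0.
Proof.
move=> kT.
have [IH1 IH2] := traj_ind k kT.
pose g := stack (c n k).
have -> : (fun u : 'M[R]_(nu, T.+1) => c n k (traj f x0 u k) (uat u k))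
   = fun u => g (\col_j hh k j u).
  by apply/funext => u; rewrite colhh /g /stack col_mxKu col_mxKd.
have [C1 [C2' _]] := Hc n k kT.
have Hh := hh_prop k IH2.
have [S [D1 D2]] := S2_comp g (hh k) C1 C2' (fun j => (Hh j).1).
split; first exact: S.
split.
  rewrite (D1 ubar du) colhh IH1 mxE; apply: eq_bigr => j _.
  by rewrite (Hh j).2.1 /gradc /grad !mxE deriveE // mulrC.
rewrite (D2 ubar du du) colhh IH1 big_split /=.
have HG a b : 'd (fun y => 'd g y (e_ R a)) (col_mx (xbar k) (uat ubar k)) (e_ R b)
    = hess (stack (c n k)) (col_mx (xbar k) (uat ubar k)) a b.
  rewrite /hess mxE.
  have -> : (fun y => derive g y (e_ R a)) = (fun y => 'd g y (e_ R a)).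
    by apply/funext => y; rewrite deriveE.
  by rewrite deriveE.
congr (_ + _).
  rewrite big_split_ord /= [X in _ + X]big1 ?addr0; last first.
    by move=> j _; rewrite (Hh (rshift nx j)).2.2 col_mxEd mxE mul0r.
  rewrite mxE; apply: eq_bigr => j _.
  by rewrite (Hh (lshift nu j)).2.2 col_mxEu /M1x_ /gradc /grad !mxE deriveE // mulrC.
rewrite -quad_form; apply: eq_bigr => j _.
rewrite (Hh j).2.1; congr (_ * _); apply: eq_bigr => i _.
by rewrite (Hh i).2.1 HG.
Qed.

Definition term n k := fun u : 'M[R]_(nu, T.+1) => c n k (traj f x0 u k) (uat u k).

Lemma J_S2 n : S2 (@Jcost R N nx nu T f c x0 n) /\
  'd (@Jcost R N nx nu T f c x0 n) ubar du = \sum_(k < T.+1) 'd (term n k) ubar du /\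
  'd (fun z => 'd (@Jcost R N nx nu T f c x0 n) z du) ubar du
    = \sum_(k < T.+1) 'd (fun z => 'd (term n k) z du) ubar du.
Proof.
have St (k : 'I_T.+1) : S2 (term n k) := (cost_term n k (ltn_ord k)).1.
have JE : @Jcost R N nx nu T f c x0 n = fun u => \sum_(k < T.+1) term n k u by [].
have dJ w : differentiable (@Jcost R N nx nu T f c x0 n) w /\
    forall v, 'd (@Jcost R N nx nu T f c x0 n) w v = \sum_(k < T.+1) 'd (term n k) w v.
  rewrite JE; exact: (diff_sum_fin (fun k : 'I_T.+1 => term n k) w (fun k => (St k).1 w)).
have PE v : (fun z => 'd (@Jcost R N nx nu T f c x0 n) z v) = fun z => \sum_(k < T.+1) 'd (term n k) z v.
  by apply/funext => z; exact: (dJ z).2.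
split; first split.
- by move=> w; exact: (dJ w).1.
- move=> v w; rewrite PE.
  exact: (diff_sum_fin (fun (k : 'I_T.+1) z => 'd (term n k) z v) w (fun k => (St k).2 v w)).1.
split; first exact: (dJ ubar).2.
rewrite PE.
exact: (diff_sum_fin (fun (k : 'I_T.+1) z => 'd (term n k) z du) ubar (fun k => (St k).2 du ubar)).2.
Qed.

Lemma main_eq n (dx Dx : nat -> 'cV[R]_nx) :
  dx 0%N = 0 -> Dx 0%N = 0 ->
  (forall k, (k <= T)%N ->
     dx k.+1 = A_ f xbar ubar k *m dx k + B_ f xbar ubar k *m uat du k) ->
  (forall k, (k <= T)%N ->
     Dx k.+1 = A_ f xbar ubar k *m Dx k + R_ f xbar ubar k (dx k) (uat du k)) ->
  static_cost f c x0 ubar n du = dyn_cost c xbar ubar n dx Dx du.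
Proof.
move=> dx0 Dx0 Hdx HDx.
have Edx k : (k <= T.+1)%N -> dx k = dxs f xbar ubar du k.
  elim: k => [//|k IH kT]; rewrite Hdx // /= IH //; exact: ltnW.
have EDx k : (k <= T.+1)%N -> Dx k = Dxs f xbar ubar du k.
  elim: k => [//|k IH kT]; rewrite HDx // /= IH ?Edx //; exact: ltnW.
have [SJ [D1 D2]] := J_S2 n.
rewrite /static_cost. rewrite (@lin_delta R _ _ (@Jcost R N nx nu T f c x0 n) ubar du (SJ.1 ubar)).
rewrite (@lin_delta2 R _ _ (@Jcost R N nx nu T f c x0 n) ubar du SJ).
transitivity (@Jcost R N nx nu T f c x0 n ubar + \sum_(k < T.+1) 'd (term n k) ubar du
   + 2^-1 * \sum_(k < T.+1) 'd (fun z => 'd (term n k) z du) ubar du).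
  congr (_ + _ + _ * _). exact: D1. exact: D2.
rewrite /dyn_cost /Jcost !mulr_sumr -!big_split /=; apply: eq_bigr => k _.
have kT : (k <= T)%N := ltn_ord k.
have [_ [T1 T2]] := cost_term n k kT.
transitivity (c n k (xbar k) (uat ubar k)
   + (gradc c xbar ubar n k *m col_mx (dxs f xbar ubar du k) (uat du k)) 0 0
   + 2^-1 * ((M1x_ c xbar ubar n k *m Dxs f xbar ubar du k) 0 0
      + ((col_mx (dxs f xbar ubar du k) (uat du k))^T
          *m hess (stack (c n k)) (col_mx (xbar k) (uat ubar k))
          *m col_mx (dxs f xbar ubar du k) (uat du k)) 0 0)).
  rewrite (traj_ind k kT).1; congr (_ + _ + _ * _); [exact: T1 | exact: T2].
rewrite /M_ blk Edx ?EDx; try exact: ltnW.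
rewrite /M1x_.
set a := c n k _ _; set gw := (gradc c xbar ubar n k *m _) 0 0.
set Q := (_^T *m _ *m _) 0 0; set M1 := (_ *m Dxs f xbar ubar du k) 0 0.
have h2 : (2 : R) != 0 by rewrite pnatr_eq0.
by field.
Qed.
End Main.

Theorem lemma4 (R : realType) (N nx nu T : nat) (own : 'I_nu -> 'I_N)
  (f : nat -> 'cV[R]_nx -> 'cV[R]_nu -> 'cV[R]_nx)
  (c : 'I_N -> nat -> 'cV[R]_nx -> 'cV[R]_nu -> R)
  (x0 : 'cV[R]_nx) (xbar : nat -> 'cV[R]_nx) (ubar : 'M[R]_(nu, T.+1)) :
  (forall k l, (k <= T)%N -> C2 (stack (fun x u => f k x u l 0))) ->
  (forall n k, (k <= T)%N -> C2 (stack (c n k))) ->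
  xbar 0%N = x0 ->
  (forall k, (k < T)%N -> xbar k.+1 = f k (xbar k) (uat ubar k)) ->
  (forall (n : 'I_N) (du : 'M[R]_(nu, T.+1)) (dx Dx : nat -> 'cV[R]_nx),
     dx 0%N = 0 -> Dx 0%N = 0 ->
     (forall k, (k <= T)%N ->
        dx k.+1 = A_ f xbar ubar k *m dx k + B_ f xbar ubar k *m uat du k) ->
     (forall k, (k <= T)%N ->
        Dx k.+1 = A_ f xbar ubar k *m Dx k
                  + R_ f xbar ubar k (dx k) (uat du k)) ->
     static_cost f c x0 ubar n du = dyn_cost c xbar ubar n dx Dx du)
  /\
  (forall du : 'M[R]_(nu, T.+1),
     isNash own (static_cost f c x0 ubar) du <->
     isNash own (dyn_cost_u f c xbar ubar) du).
Proof.
move=> Hf Hc Hx0 Hxbar.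
have P1 : forall (n : 'I_N) (du : 'M[R]_(nu, T.+1)) (dx Dx : nat -> 'cV[R]_nx),
     dx 0%N = 0 -> Dx 0%N = 0 ->
     (forall k, (k <= T)%N ->
        dx k.+1 = A_ f xbar ubar k *m dx k + B_ f xbar ubar k *m uat du k) ->
     (forall k, (k <= T)%N ->
        Dx k.+1 = A_ f xbar ubar k *m Dx k
                  + R_ f xbar ubar k (dx k) (uat du k)) ->
     static_cost f c x0 ubar n du = dyn_cost c xbar ubar n dx Dx du.
  move=> n du dx Dx; apply: main_eq => //.
split; first exact: P1.
have E : static_cost f c x0 ubar = dyn_cost_u f c xbar ubar.
  apply/funext => n; apply/funext => du.
  by apply: P1.
by move=> du; rewrite E.
Qed.
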